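(* For every fixed $C\in\mathbb C$ there exists a unique formal series $\rho\in\mathbb C[[\zeta^{-1}]]$ satisfying $$2\zeta^3\rho'''+3\zeta^2\rho''-2\zeta(\zeta-2C)\rho'-2C\rho=0,\qquad\rho(\infty)=1,$$ where $'=d/d\zeta$ and $\rho(\infty)$ is the constant term. Moreover $\rho\in\mathbb Q[C][[\zeta^{-1}]]$ and $\rho$ satisfies $$\zeta\rho'^2+\Bigl(1-\frac{2C}\zeta\Bigr)\rho^2-\rho\rho'-2\zeta\rho\rho''=1.$$ *)

(* Defs.v *)
From HB Require Import structures.
From mathcomp Require Import all_boot all_order all_algebra.
From mathcomp Require Import complex.
From mathcomp Require Import Rstruct.
Set Implicit Arguments. Unset Strict Implicit. Unset Printing Implicit Defensive.
Import Order.TTheory GRing.Theory Num.Theory.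
Local Open Scope ring_scope.

Definition CC : Type := complex Rdefinitions.R.
Check (CC : numClosedFieldType).

(* A formal series in zeta^{-1}: coefficient sequence a, rho = sum_n a n * zeta^(-n). *)
Definition fps (K : Type) := nat -> K.

(* Laurent series in zeta^{-1}: coefficient of zeta^m for m : int. Only used to
   state identities; elements of C[[zeta^{-1}]] embed with coefficient 0 at m > 0. *)
Definition lser (K : Type) := int -> K.

Section Ops.
Variable K : comPzRingType.

Definition emb (a : fps K) : lser K :=
  fun m => match m with Posz 0 => a 0%N | Posz _ => 0 | Negz k => a k.+1 end.

(* d/dzeta : zeta^(-n) |-> -n zeta^(-n-1) *)
Definition fderiv (a : fps K) : fps K :=
  fun n => match n with 0%N => 0 | k.+1 => - (k%:R * a k) end.

Definition fmul (a b : fps K) : fps K :=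
  fun n => \sum_(i < n.+1) a i * b (n - i)%N.

Definition fconst (c : K) : fps K := fun n => if n is 0%N then c else 0.

Definition ladd (f g : lser K) : lser K := fun m => f m + g m.
Definition lscale (c : K) (f : lser K) : lser K := fun m => c * f m.
Definition lmulz (f : lser K) : lser K := fun m => f (m - 1).
Definition lmulzinv (f : lser K) : lser K := fun m => f (m + 1).
End Ops.

Section Eqs.
Variable K : comPzRingType.
Variables (C : K) (rho : fps K).
Local Notation d1 := (fderiv rho).
Local Notation d2 := (fderiv (fderiv rho)).
Local Notation d3 := (fderiv (fderiv (fderiv rho))).

Definition ode_lhs : lser K :=
  ladd (lscale 2 (lmulz (lmulz (lmulz (emb d3)))))
  (ladd (lscale 3 (lmulz (lmulz (emb d2))))
  (ladd (lscale (-2) (lmulz (ladd (lmulz (emb d1)) (lscale (- (2 * C)) (emb d1)))))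
        (lscale (- (2 * C)) (emb rho)))).

Definition quad_lhs : lser K :=
  ladd (lmulz (emb (fmul d1 d1)))
  (ladd (ladd (emb (fmul rho rho)) (lscale (- (2 * C)) (lmulzinv (emb (fmul rho rho)))))
  (ladd (lscale (-1) (emb (fmul rho d1)))
        (lscale (-2) (lmulz (emb (fmul rho d2)))))).
End Eqs.

Definition lzero (K : comPzRingType) : lser K := fun _ => 0.

(* Main.v *)
Require Import Defs.
From HB Require Import structures.
From mathcomp Require Import all_boot all_order all_algebra.
From mathcomp Require Import complex Rstruct ring.
From Stdlib Require Import FunctionalExtensionality.
Import GRing.Theory Num.Theory.
Local Open Scope ring_scope.
Ltac simpn := rewrite ?subnn ?addn0 ?add0n ?subn0.

Definition sh (u : fps CC) : fps CC := fun n => if n is k.+1 then u k else 0.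

Lemma rev_sum n (G : nat -> CC) :
  \sum_(i < n.+1) G i = \sum_(i < n.+1) G (n - i)%N.
Proof.
rewrite (reindex_inj rev_ord_inj) /=; apply: eq_bigr => i _; by rewrite subSS.
Qed.

Lemma fmulC (u v : fps CC) n : fmul u v n = fmul v u n.
Proof.
rewrite /fmul (rev_sum n (fun i => u i * v (n - i)%N)); apply: eq_bigr => i _.
rewrite subKn; [exact: mulrC | by rewrite -ltnS].
Qed.

Lemma fmul_shl (u v : fps CC) n : fmul (sh u) v n.+1 = fmul u v n.
Proof.
rewrite /fmul big_ord_recl /= mul0r add0r; apply: eq_bigr => i _; by [].
Qed.

Lemma fmul_shr (u v : fps CC) n : fmul u (sh v) n.+1 = fmul u v n.
Proof. by rewrite fmulC fmul_shl fmulC. Qed.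

Lemma fderiv_sh (u : fps CC) : fderiv u = sh (fun n => - (n%:R * u n)).
Proof. by apply: functional_extensionality => -[|n]. Qed.

Lemma sh_mul (u : fps CC) :
  (fun n => - (n%:R * sh u n)) = sh (fun n => - (n.+1%:R * u n)).
Proof. apply: functional_extensionality => -[|n] /=; by rewrite ?mul0r ?oppr0. Qed.

Lemma antisym n (F : nat -> nat -> CC) (a : fps CC) :
  (forall i j, F i j = - F j i) ->
  \sum_(i < n.+1) F i (n - i)%N * (a i * a (n - i)%N) = 0.
Proof.
move=> HF.
have H : \sum_(i < n.+1) F i (n - i)%N * (a i * a (n - i)%N) =
   - \sum_(i < n.+1) F i (n - i)%N * (a i * a (n - i)%N).
  rewrite [in LHS](rev_sum n (fun i => F i (n - i)%N * (a i * a (n - i)%N))) -sumrN.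
  apply: eq_bigr => i _.
  rewrite subKn; last by rewrite -ltnS.
  by rewrite HF mulNr [a (n - i)%N * _]mulrC.
move/eqP: H; rewrite -subr_eq0 opprK -mulr2n mulrn_eq0 /=.
by move/eqP.
Qed.
Definition Pj (C : CC) (j : nat) : CC := (2 * j%:R + 1) * (j%:R * j.+1%:R + 2 * C).
Lemma key1 (C : CC) (a : fps CC) k :
  (forall n, 2 * n.+1%:R * a n.+1 = Pj C n * a n) ->
  k.+1%:R * fmul a a k.+1 = \sum_(i < k.+1) a i * a (k - i)%N * Pj C (k - i)%N.
Proof.
move=> Rec; rewrite /fmul mulr_sumr.
transitivity (\sum_(i < k.+2) ((k.+1 - i)%:R * (a i * a (k.+1 - i)%N) + (i : nat)%:R * (a i * a (k.+1 - i)%N))).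
  apply: eq_bigr => i _.
  have hi : (i <= k.+1)%N by rewrite -ltnS.
  by rewrite -mulrDl -natrD subnK.
rewrite big_split /=.
have E : \sum_(i < k.+2) (i : nat)%:R * (a i * a (k.+1 - i)%N) =
         \sum_(i < k.+2) (k.+1 - i)%:R * (a i * a (k.+1 - i)%N).
  rewrite (rev_sum k.+1 (fun i => i%:R * (a i * a (k.+1 - i)%N))).
  apply: eq_bigr => i _.
  have hi : (i <= k.+1)%N by rewrite -ltnS.
  by rewrite subKn // [a (k.+1 - i)%N * _]mulrC.
rewrite E -mulr2n big_ord_recr /= subnn mul0r addr0 -sumrMnl.
apply: eq_bigr => i _.
have hi : (i <= k)%N by rewrite -ltnS.
rewrite subSn //.
move: (k - i)%N => j.
transitivity (a i * (2 * j.+1%:R * a j.+1)); first ring.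
rewrite Rec; ring.
Qed.

Lemma emb_Nz1 (u : fps CC) k : emb u (Negz k + 1) = u k.
Proof. case: k => [|k] /=; first done. by rewrite subn1. Qed.
Definition Fa (C : CC) (i j : nat) : CC :=
  i%:R ^+ 2 * j%:R - i%:R * j%:R ^+ 2 - 2 * C * i%:R + 2 * C * j%:R.
Lemma qN (C : CC) (a : fps CC) k :
  (forall n, 2 * n.+1%:R * a n.+1 = Pj C n * a n) ->
  quad_lhs C a (Negz k) = 0.
Proof.
move=> Rec.
rewrite /quad_lhs /ladd /lscale /lmulz /lmulzinv /= addn0 emb_Nz1.
rewrite !fderiv_sh sh_mul !fmul_shl !fmul_shr.
have hk : (k.+1%:R : CC) != 0 by rewrite pnatr_eq0.
apply: (mulfI hk); rewrite mulr0.
rewrite !mulrDr (key1 C a k Rec) /fmul !mulr_sumr -!big_split /=.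
have HF : forall i j, Fa C i j = - Fa C j i by move=> i j; rewrite /Fa; ring.
rewrite -[RHS](antisym k (Fa C) a HF). apply: eq_bigr => i _.
have hi : (i <= k)%N by rewrite -ltnS.
have hk3 : (k.+1%:R : CC) = (i + (k - i)).+1%:R by rewrite subnKC.
rewrite hk3; move: (k - i)%N => j.
rewrite /Fa /Pj.
ring.
Qed.
Definition E (C : CC) (a : fps CC) (n : nat) : CC :=
  2 * (n.+1)%:R * a n.+1 - Pj C n * a n.
Lemma ode0 (C : CC) (a : fps CC) : ode_lhs C a (Posz 0) = E C a 0.
Proof. rewrite /ode_lhs /ladd /lscale /lmulz /= /E /Pj /=; simpn. ring. Qed.
Lemma odeN (C : CC) (a : fps CC) k : ode_lhs C a (Negz k) = E C a k.+1.
Proof. rewrite /ode_lhs /ladd /lscale /lmulz /= /E /Pj /=; simpn. ring. Qed.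
Lemma odeP (C : CC) (a : fps CC) k : ode_lhs C a (Posz k.+1) = 0.
Proof. case: k => [|[|[|k]]]; rewrite /ode_lhs /ladd /lscale /lmulz /=; simpn; ring. Qed.

Fixpoint pp (n : nat) : {poly rat} :=
  if n is k.+1 then
    ((2 * k%:R + 1) / (2 * k.+1%:R))%:P * ((k%:R * k.+1%:R)%:P + 2%:P * 'X) * pp k
  else 1.

Definition aa (C : CC) (n : nat) : CC := (map_poly (ratr : rat -> CC) (pp n)).[C].

Lemma mX (C : CC) : (map_poly (ratr : rat -> CC) 'X).[C] = C.
Proof. rewrite map_polyX hornerX. done. Qed.
Lemma mC (C : CC) q : (map_poly (ratr : rat -> CC) q%:P).[C] = ratr q.
Proof. by rewrite map_polyC hornerC. Qed.
Lemma mM (C : CC) p q : (map_poly (ratr : rat -> CC) (p * q)).[C] = (map_poly (ratr : rat -> CC) p).[C] * (map_poly (ratr : rat -> CC) q).[C].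
Proof. by rewrite rmorphM hornerM. Qed.
Lemma mD (C : CC) p q : (map_poly (ratr : rat -> CC) (p + q)).[C] = (map_poly (ratr : rat -> CC) p).[C] + (map_poly (ratr : rat -> CC) q).[C].
Proof. by rewrite rmorphD hornerD. Qed.

Lemma aa_rec (C : CC) n : 2 * n.+1%:R * aa C n.+1 = Pj C n * aa C n.
Proof.
rewrite /aa /= !mM mD !mM !mC mX /Pj.
rewrite fmorph_div /= !(rmorphD, rmorphM, rmorph_nat, rmorph1) /=.
field.
by rewrite nat1r pnatr_eq0.
Qed.

Lemma q0 (C : CC) (a : fps CC) : a 0%N = 1 -> quad_lhs C a (Posz 0) = 1.
Proof. move=> h0. rewrite /quad_lhs /ladd /lscale /lmulz /lmulzinv /= /fmul /=.
rewrite !big_ord_recr !big_ord0 /=; simpn. rewrite h0. ring. Qed.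
Lemma qP (C : CC) (a : fps CC) k : quad_lhs C a (Posz k.+1) = 0.
Proof. case: k => [|k]; rewrite /quad_lhs /ladd /lscale /lmulz /lmulzinv /= /fmul /=;
rewrite ?big_ord_recr ?big_ord0 /=; simpn; ring. Qed.
Lemma E_eq0 (C : CC) (s : fps CC) : ode_lhs C s = lzero CC -> forall n, E C s n = 0.
Proof.
move=> H [|k].
  by rewrite -ode0 H.
by rewrite -odeN H.
Qed.

Theorem proposition4p1 (C : CC) :
  exists rho : fps CC,
    ((ode_lhs C rho = lzero CC /\ rho 0%N = 1) /\
     (forall sigma : fps CC,
        ode_lhs C sigma = lzero CC /\ sigma 0%N = 1 -> sigma = rho)) /\
    (exists p : nat -> {poly rat},
        forall n : nat, rho n = (map_poly (ratr : rat -> CC) (p n)).[C]) /\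
    quad_lhs C rho = emb (fconst (1 : CC)).
Proof.
have a0 : aa C 0 = 1 by rewrite /aa /= rmorph1 hornerC.
have Ea : forall n, E C (aa C) n = 0 by move=> n; rewrite /E aa_rec subrr.
exists (aa C); split; [split; [split|] | split].
- apply: functional_extensionality => -[[|k]|k].
  + by rewrite ode0 Ea.
  + by rewrite odeP.
  + by rewrite odeN Ea.
- exact: a0.
- move=> s [Hs s0].
  have Es := E_eq0 C s Hs.
  apply: functional_extensionality; elim => [|n IH]; first by rewrite s0 a0.
  have hn : (2 * n.+1%:R : CC) != 0 by rewrite mulf_neq0 // pnatr_eq0.
  apply: (mulfI hn).
  move: (Es n) (Ea n); rewrite /E IH => /eqP; rewrite subr_eq0 => /eqP ->.
  by move/eqP; rewrite subr_eq0 => /eqP ->.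
- by exists pp.
- apply: functional_extensionality => -[[|k]|k].
  + by rewrite q0.
  + by rewrite qP.
  + by rewrite qN //; apply: aa_rec.
Qed.
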